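(* Let $(X,r)$ be a non-degenerate involutive set-theoretic solution with $|X|=n$, identified with $\{1,\dots,n\}$, with table $\mathcal{T}$, and let $(\mathcal{X}^2,\tilde r)$ be the induced pair. Let $\mathrm{Orb}(T_1^1)$ be the orbit of $T_1^1$ under the action of the structure group $G(\mathcal{X}^2,\tilde r)$ on $\mathcal{X}^2$. The following are equivalent: (i) $(\mathcal{X}^2,\tilde r)$ is indecomposable; (ii) $\mathrm{Orb}(T_1^1)=\mathcal{X}^2$; (iii) for every $1\le s,m\le n$ there exist a natural number $\ell$ and $1\le i_1,\dots,i_\ell,k_1,\dots,k_\ell\le n$ such that $\sigma_{i_1}\sigma_{i_2}\cdots\sigma_{i_\ell}(1)=s$ and $\sigma_{k_1}\sigma_{k_2}\cdots\sigma_{k_\ell}(1)=m$; (iv) for every $1\le s,m\le n$ there exists a natural number $\ell$ such that $s$ and $m$ both appear in column $\ell$ of $\mathcal{T}$.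
   Context: A set-theoretic solution is $r:X\times X\to X\times X$, $r(x,y)=(\sigma_x(y),\gamma_y(x))$, with $r^{12}r^{23}r^{12}=r^{23}r^{12}r^{23}$; non-degenerate: all $\sigma_x,\gamma_x$ bijective; involutive: $r\circ r=\mathrm{Id}$. Induced pair: $\mathcal{X}^2=\{T_i^k:1\le i,k\le n\}$ ($n^2$ symbols), $\tilde r(T_i^k,T_j^l)=(g_i^k(T_j^l),f_j^l(T_i^k))$ with $g_i^k(T_j^l)=T_{\sigma_i(j)}^{\sigma_k(l)}$, $f_j^l(T_i^k)=T_{\gamma_j(i)}^{\gamma_l(k)}$; it is a non-degenerate involutive solution. The structure group of a solution $(Y,s)$ with $s(x,y)=(\alpha_x(y),\beta_y(x))$ is $G(Y,s)=\langle Y\mid xy=\alpha_x(y)\beta_y(x),\ x,y\in Y\rangle$; it acts on $Y$ with generator $x$ acting as $\alpha_x$ (so for $G(\mathcal{X}^2,\tilde r)$, the generator $T_i^k$ acts as $g_i^k$). A subset $Z$ is non-degenerate invariant if $s(Z\times Z)\subseteq Z\times Z$ and the restriction is a non-degenerate involutive solution; a solution is decomposable if it is a union of two non-empty disjoint non-degenerate invariant subsets, indecomposable otherwise. The table $\mathcal{T}$ of $(X,r)$ has columns indexed by natural numbers $\ell\ge1$, and column $\ell$ consists of all $s\in X$ for which there exist $1\le i_1,\dots,i_\ell\le n$ with $\sigma_{i_1}\sigma_{i_2}\cdots\sigma_{i_\ell}(1)=s$. *)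

(* Defs.v *)
From mathcomp Require Import all_boot.
Set Implicit Arguments. Unset Strict Implicit. Unset Printing Implicit Defensive.

(* A map s : Y*Y -> Y*Y, s(x,y) = (alpha x y, beta y x), on a finite type Y. *)
Section Solutions.
Variable Y : finType.
Variables (alpha beta : Y -> Y -> Y).

Definition s12 (t : Y * Y * Y) : Y * Y * Y :=
  let: (x, y, z) := t in (alpha x y, beta y x, z).
Definition s23 (t : Y * Y * Y) : Y * Y * Y :=
  let: (x, y, z) := t in (x, alpha y z, beta z y).

Definition ybe_on (Z : {set Y}) : Prop :=
  forall x y z, x \in Z -> y \in Z -> z \in Z ->
    s12 (s23 (s12 (x, y, z))) = s23 (s12 (s23 (x, y, z))).

Definition involutive_on (Z : {set Y}) : Prop :=
  forall x y, x \in Z -> y \in Z ->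
    alpha (alpha x y) (beta y x) = x /\ beta (beta y x) (alpha x y) = y.

Definition bij_on (Z : {set Y}) (f : Y -> Y) : Prop :=
  (forall y, y \in Z -> f y \in Z) /\
  {in Z &, injective f} /\
  (forall z, z \in Z -> exists2 y, y \in Z & f y = z).

Definition nondeg_on (Z : {set Y}) : Prop :=
  forall x, x \in Z -> bij_on Z (alpha x) /\ bij_on Z (beta x).

Definition nd_inv_solution_on (Z : {set Y}) : Prop :=
  [/\ ybe_on Z, involutive_on Z & nondeg_on Z].

Definition nd_inv_solution : Prop := nd_inv_solution_on [set: Y].

Definition nd_invariant (Z : {set Y}) : Prop :=
  (forall x y, x \in Z -> y \in Z -> alpha x y \in Z /\ beta y x \in Z) /\
  nd_inv_solution_on Z.

Definition decomposable : Prop :=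
  exists Z1 Z2 : {set Y},
    [/\ Z1 != set0, Z2 != set0, [disjoint Z1 & Z2], Z1 :|: Z2 = [set: Y]
      & nd_invariant Z1 /\ nd_invariant Z2].

Definition indecomposable : Prop := ~ decomposable.

(* Orbit of y0 under the action of the structure group G(Y,s), in which the
   generator x acts as alpha x: the smallest set containing y0 and closed
   under every alpha x and every (alpha x)^-1. *)
Inductive orbit (y0 : Y) : Y -> Prop :=
  | orbit_base : orbit y0 y0
  | orbit_gen : forall x y, orbit y0 y -> orbit y0 (alpha x y)
  | orbit_inv : forall x y, orbit y0 (alpha x y) -> orbit y0 y.

End Solutions.

(* Induced pair on X^2 = X * X, where T_i^k is the pair (i, k). *)
Section Induced.
Variable X : finType.
Variables (sigma gamma : X -> X -> X).

Definition ind_g (ik jl : X * X) : X * X := (sigma ik.1 jl.1, sigma ik.2 jl.2).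
Definition ind_f (jl ik : X * X) : X * X := (gamma jl.1 ik.1, gamma jl.2 ik.2).

Definition apply_word (w : seq X) (x : X) : X := foldr (fun i acc => sigma i acc) x w.

(* s lies in column l of the table (base point x1 = "1") *)
Definition in_column (x1 : X) (l : nat) (s : X) : Prop :=
  exists w : seq X, size w = l /\ apply_word w x1 = s.
(* Orb(T_1^1): orbit of T_1^1 = (x1, x1) under G(X^2, r~), generator T_i^k acting as g_i^k *)
Definition ind_orbit (x1 : X) (T : X * X) : Prop := orbit ind_g (x1, x1) T.

Definition ind_indecomposable : Prop := indecomposable ind_g ind_f.
End Induced.

(* Main.v *)
Require Import Defs.
From mathcomp Require Import all_boot.
From Stdlib Require Import ClassicalEpsilon Classical.

Lemma inv_closed_nd (Y : finType) (alpha beta : Y -> Y -> Y) (Z : {set Y}) :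
  nd_inv_solution alpha beta -> (forall x y, (alpha x y \in Z) = (y \in Z)) ->
  nd_invariant alpha beta Z.
Proof.
case=> Hybe Hinv Hnd Hcl.
have Hb : forall x y, x \in Z -> beta y x \in Z.
  move=> x y xZ. have [H1 _] := Hinv x y (in_setT _) (in_setT _).
  by rewrite -(Hcl (alpha x y)) H1.
split.
  by move=> x y xZ yZ; split; [rewrite Hcl | exact: Hb].
split.
- move=> x y z _ _ _; exact: Hybe.
- move=> x y _ _; exact: Hinv.
- move=> x xZ; have [[_ [ia sa]] [_ [ib sb]]] := Hnd x (in_setT x).
  split; split.
  + by move=> y; rewrite Hcl.
  + split; first by move=> ? ? _ _; apply: ia; rewrite in_setT.
    move=> z zZ; have [y _ yz] := sa z (in_setT z).
    by exists y => //; rewrite -(Hcl x) yz.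
  + by move=> y yZ; apply: Hb.
  + split; first by move=> ? ? _ _; apply: ib; rewrite in_setT.
    move=> z zZ; have [y _ yz] := sb z (in_setT z).
    exists y => //.
    have [_ H2] := Hinv x y (in_setT _) (in_setT _).
    have [H1 _] := Hinv y x (in_setT _) (in_setT _).
    by rewrite -H1 Hcl yz.
Qed.

Lemma ind_sol (X : finType) (sigma gamma : X -> X -> X) :
  nd_inv_solution sigma gamma -> nd_inv_solution (ind_g sigma) (ind_f gamma).
Proof.
case=> Hybe Hinv Hnd; split.
- move=> [x1 x2] [y1 y2] [z1 z2] _ _ _.
  move: (Hybe x1 y1 z1 (in_setT _) (in_setT _) (in_setT _)).
  move: (Hybe x2 y2 z2 (in_setT _) (in_setT _) (in_setT _)).
  rewrite /s12 /s23 /ind_g /ind_f /=.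
  by case=> -> -> -> [] -> -> ->.
- move=> [x1 x2] [y1 y2] _ _; rewrite /ind_g /ind_f /=.
  have [-> ->] := Hinv x1 y1 (in_setT _) (in_setT _).
  by have [-> ->] := Hinv x2 y2 (in_setT _) (in_setT _).
- move=> [x1 x2] _.
  have [[_ [ia1 sa1]] [_ [ib1 sb1]]] := Hnd x1 (in_setT _).
  have [[_ [ia2 sa2]] [_ [ib2 sb2]]] := Hnd x2 (in_setT _).
  split; split; rewrite ?in_setT //; split.
  + move=> [a1 a2] [b1 b2] _ _; rewrite /ind_g /= => -[e1 e2].
    by rewrite (ia1 a1 b1) ?in_setT // (ia2 a2 b2) ?in_setT.
  + move=> [z1 z2] _; have [y1 _ <-] := sa1 z1 (in_setT _).
    by have [y2 _ <-] := sa2 z2 (in_setT _); exists (y1, y2); rewrite ?in_setT.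
  + move=> [a1 a2] [b1 b2] _ _; rewrite /ind_f /= => -[e1 e2].
    by rewrite (ib1 a1 b1) ?in_setT // (ib2 a2 b2) ?in_setT.
  + move=> [z1 z2] _; have [y1 _ <-] := sb1 z1 (in_setT _).
    by have [y2 _ <-] := sb2 z2 (in_setT _); exists (y1, y2); rewrite ?in_setT.
Qed.

Definition pb (P : Prop) : bool := if excluded_middle_informative P then true else false.
Lemma pbP (P : Prop) : reflect P (pb P).
Proof. by rewrite /pb; case: excluded_middle_informative => h; constructor. Qed.

Lemma nd_closed_iff (Y : finType) (alpha beta : Y -> Y -> Y) (Z : {set Y}) x y :
  nd_invariant alpha beta Z -> injective (alpha x) -> x \in Z ->
  (alpha x y \in Z) = (y \in Z).
Proof.
move=> [cl [_ _ nd]] inj xZ; apply/idP/idP => h; last by have [] := cl x y xZ h.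
have [[_ [_ sa]] _] := nd x xZ.
have [y' y'Z e] := sa _ h.
by rewrite -(inj _ _ e).
Qed.

Lemma orbit_in (Y : finType) (alpha beta : Y -> Y -> Y) (Z1 Z2 : {set Y}) y0 :
  (forall x, injective (alpha x)) -> [disjoint Z1 & Z2] -> Z1 :|: Z2 = [set: Y] ->
  nd_invariant alpha beta Z1 -> nd_invariant alpha beta Z2 -> y0 \in Z1 ->
  forall y, Defs.orbit alpha y0 y -> y \in Z1.
Proof.
move=> inj dis U nd1 nd2 y0Z.
have HZ2 : forall y, (y \in Z2) = (y \notin Z1).
  move=> y; case: (boolP (y \in Z1)) => h; first by rewrite (disjointFr dis h).
  by move: (in_setT y); rewrite -U in_setU (negbTE h).
have sub : forall x y, (alpha x y \in Z1) = (y \in Z1).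
  move=> x y; case: (boolP (x \in Z1)) => xZ.
    exact: (nd_closed_iff _ _ _ _ x y nd1 (inj x) xZ).
  rewrite -HZ2 in xZ.
  have := nd_closed_iff _ _ _ _ x y nd2 (inj x) xZ; rewrite !HZ2.
  by case: (alpha x y \in Z1); case: (y \in Z1).
move=> y1; elim => // x y _ IH; first by rewrite sub.
by rewrite sub in IH.
Qed.

Lemma apply_nseq (X : finType) (sigma : X -> X -> X) k a x :
  apply_word sigma (nseq k a) x = iter k (sigma a) x.
Proof. by elim: k => //= k ->. Qed.

Lemma apply_cons (X : finType) (sigma : X -> X -> X) a w x :
  apply_word sigma (a :: w) x = sigma a (apply_word sigma w x).
Proof. by []. Qed.

(* X = 'I_n.+1 = {1,...,n+1} with the element "1" being ord0. *)
Theorem lemma3p11 (n : nat) (sigma gamma : 'I_n.+1 -> 'I_n.+1 -> 'I_n.+1) :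
  nd_inv_solution sigma gamma ->
  let one := (ord0 : 'I_n.+1) in
  let P1 := ind_indecomposable sigma gamma in
  let P2 := forall T : 'I_n.+1 * 'I_n.+1, ind_orbit sigma one T in
  let P3 := forall s m : 'I_n.+1, exists l : nat, exists iw kw : seq 'I_n.+1,
              [/\ size iw = l, size kw = l,
                  apply_word sigma iw one = s & apply_word sigma kw one = m] in
  let P4 := forall s m : 'I_n.+1, exists l : nat,
              1 <= l /\ in_column sigma one l s /\ in_column sigma one l m in
  [/\ P1 <-> P2, P2 <-> P3 & P3 <-> P4].
Proof.
move=> Hsol one P1 P2 P3 P4.
have sinj : forall i, injective (sigma i).
  move=> i a b e; case: Hsol => _ _ nd; have [[_ [ia _]] _] := nd i (in_setT _).
  by apply: ia; rewrite ?in_setT.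
have ginj : forall x, injective (ind_g sigma x).
  move=> [x1 x2] [a1 a2] [b1 b2]; rewrite /ind_g /= => -[/sinj -> /sinj ->] //.
have isol := ind_sol _ _ _ Hsol.
pose R (T : 'I_n.+1 * 'I_n.+1) := exists iw kw, [/\ size iw = size kw,
  apply_word sigma iw one = T.1 & apply_word sigma kw one = T.2].
have Rg : forall x T, R T -> R (ind_g sigma x T).
  move=> [x1 x2] T [iw [kw [e1 e2 e3]]].
  by exists (x1 :: iw), (x2 :: kw); rewrite /= e1 e2 e3.
have Rit : forall x k T, R T -> R (iter k (ind_g sigma x) T).
  by move=> x; elim=> //= k IH T /IH; apply: Rg.
have P23 : P2 <-> P3.
  split.
  - move=> H2 s m.
    have : R (s, m).
      elim: (H2 (s, m)) => [|x y _ IH|x y _ IH].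
      + by exists [::], [::].
      + exact: Rg.
      + rewrite -(finv_f (ginj x) y); exact: Rit.
    by case=> iw [kw [e1 e2 e3]]; exists (size iw), iw, kw.
  - move=> H3 [s m]; have [l [iw [kw [Hi Hk <- <-]]]] := H3 s m.
    have : size iw = size kw by rewrite Hi Hk.
    elim: iw kw {Hi Hk} => [|a iw IH] [|b kw] //=.
      move=> _; exact: orbit_base.
    by move=> [/IH h]; exact: (orbit_gen (a, b) h).
have P34 : P3 <-> P4.
  split.
  - move=> H3 s m; have [[|l] [iw [kw [Hi Hk Hs Hm]]]] := H3 s m.
      move/size0nil: Hi Hs => ->; move/size0nil: Hk Hm => -> /= <- <-.
      exists (order (sigma one) one); split; first exact: order_gt0.
      have e : apply_word sigma (nseq (order (sigma one) one) one) one = one.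
        by rewrite apply_nseq iter_order.
      by split; exists (nseq (order (sigma one) one) one); rewrite size_nseq.
    by exists l.+1; split => //; split; [exists iw | exists kw].
  - move=> H4 s m; have [l [_ [[iw [Hi Hs]] [kw [Hk Hm]]]]] := H4 s m.
    by exists l, iw, kw.
split => //; split.
- move=> H1 T; apply: NNPP => nT; apply: H1.
  pose Z := [set U | pb (ind_orbit sigma one U)].
  have cl : forall x y, (ind_g sigma x y \in Z) = (y \in Z).
    move=> x y; rewrite !inE; apply/pbP/pbP; first exact: orbit_inv.
    exact: orbit_gen.
  exists Z, (~: Z); split.
  + apply/set0Pn; exists (one, one); rewrite inE; apply/pbP; exact: orbit_base.
  + by apply/set0Pn; exists T; rewrite !inE; apply/negP => /pbP.
  + by rewrite disjoints_subset setCK subxx.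
  + exact: setUCr.
  + split; apply: inv_closed_nd => // x y.
    by rewrite !in_setC cl.
- move=> H2 [Z1 [Z2 [n1 n2 dis U [nd1 nd2]]]].
  case: (boolP ((one, one) \in Z1)) => h.
    case/set0Pn: n2 => y yZ2.
    have := orbit_in _ _ _ Z1 Z2 _ ginj dis U nd1 nd2 h y (H2 y).
    by rewrite (disjointFl dis yZ2).
  have h2 : (one, one) \in Z2.
    by move: (in_setT (one, one)); rewrite -U in_setU (negbTE h).
  have dis' : [disjoint Z2 & Z1] by rewrite disjoint_sym.
  case/set0Pn: n1 => y yZ1.
  have := orbit_in _ _ _ Z2 Z1 _ ginj dis' (etrans (setUC _ _) U) nd2 nd1 h2 y (H2 y).
  by rewrite (disjointFr dis yZ1).
Qed.
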